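(* Let $q$ be a prime power, let $\varepsilon = \frac{1}{9q}$, and let $G \in \mathbb{F}_q^{N\times n}$ be such that every nonzero vector of the form $Gx$, $x\in\mathbb{F}_q^n\setminus\{0\}$, has Hamming weight in $[d,(1+\varepsilon)d]$ for some integer $d\ge 1$. Let $Q_1,\dots,Q_m\in\mathbb{F}_q^{n\times n}$ and define $$V := \{GXG^T : X \in \mathbb{F}_q^{n\times n},\ X^T = X,\ Q_1(X) = 0,\dots,Q_m(X)=0\}\subseteq \mathbb{F}_q^{N\times N}.$$ Then: (i) if there is a nonzero $x \in \{0,1\}^n$ with $Q_\ell(xx^T)=0$ for all $\ell$, then $V$ contains a nonzero matrix $Y$ with $\|Y\|_0 \le (1+\frac{1}{3q})d^2$; (ii) if there is no nonzero $x \in \mathbb{F}_q^n$ with $Q_\ell(xx^T)=0$ for all $\ell$, then every nonzero $Y \in V$ satisfies $\|Y\|_0 \ge (1+\frac1q)d^2$.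
   Context: For $Q, X \in \mathbb{F}_q^{n\times n}$, $Q(X):=\sum_{i,j}Q[i,j]X[i,j]$. $\|Y\|_0$ is the number of nonzero entries of $Y$. *)

(* Defs.v *)
From HB Require Import structures.
From mathcomp Require Import all_boot all_order all_algebra all_field.
Set Implicit Arguments. Unset Strict Implicit. Unset Printing Implicit Defensive.
Import Order.TTheory GRing.Theory Num.Theory.
Local Open Scope ring_scope.

Definition qeval (F : fieldType) (n : nat) (Q X : 'M[F]_n) : F :=
  \sum_(i < n) \sum_(j < n) Q i j * X i j.

Definition wt (F : fieldType) (a b : nat) (Y : 'M[F]_(a, b)) : nat :=
  #|[set ij : 'I_a * 'I_b | Y ij.1 ij.2 != 0]|.

Definition inV (F : fieldType) (N n m : nat) (G : 'M[F]_(N, n))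
  (Qs : 'I_m -> 'M[F]_n) (Y : 'M[F]_N) : Prop :=
  exists X : 'M[F]_n, X^T = X /\ (forall l, qeval (Qs l) X = 0) /\
    Y = G *m X *m G^T.

Definition is01 (F : fieldType) (n : nat) (x : 'cV[F]_n) : bool :=
  [forall i, (x i 0 == 0) || (x i 0 == 1)].

(* Main.v *)
Require Import Defs.
From HB Require Import structures.
From mathcomp Require Import all_boot all_order all_algebra all_field.
From mathcomp Require Import ring lra zify.
Import Order.TTheory GRing.Theory Num.Theory.
Local Open Scope ring_scope.

Lemma wt_sum (F : fieldType) a b (Y : 'M[F]_(a,b)) :
  wt Y = (\sum_(i < a) \sum_(j < b) (Y i j != 0%R : nat))%N.
Proof.
rewrite pair_big /= /wt -sum1_card big_mkcond /=.
apply: eq_bigr => p _; rewrite inE; by case: (_ != _).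
Qed.

Lemma wt_col (F : fieldType) a (c : 'cV[F]_a) :
  wt c = (\sum_(i < a) (c i ord0 != 0%R : nat))%N.
Proof. rewrite wt_sum; apply: eq_bigr => i _; by rewrite big_ord1. Qed.

Lemma count_line (F : finFieldType) (a b : F) :
  (\sum_(l : F) ((a + l * b)%R != 0%R : nat) + (b != 0%R : nat) = #|F| * ((a != 0%R) || (b != 0%R)))%N.
Proof.
have [->|bn0] := eqVneq b 0.
  rewrite orbF addn0; under eq_bigr do rewrite mulr0 addr0.
  by rewrite sum_nat_const; case: (a != 0).
rewrite orbT muln1 /=.
have e : forall l, (a + l*b == 0) = (l == -a/b).
  move=> l; apply/eqP/eqP => [h|->]; last by field.
  by rewrite -(mulfK bn0 l) -[l*b](addKr a) h addr0.
have s1 : (\sum_(l : F) ((a + l*b)%R == 0%R : nat) = 1)%N.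
  under eq_bigr do rewrite e.
  by rewrite -big_mkcond /= sum1_card card1.
have s2 : (\sum_(l : F) ((a + l*b)%R != 0%R : nat) + \sum_(l : F) ((a + l*b)%R == 0%R : nat) = #|F|)%N.
  rewrite -big_split /= -sum1_card; apply: eq_bigr => l _; by case: (_ == _).
by rewrite -s2 s1.
Qed.

Lemma two_support (F : finFieldType) N d (u v : 'cV[F]_N) :
  (forall l : F, d <= wt (u + l *: v))%N -> (d <= wt v)%N ->
  (#|F|.+1 * d <= #|F| * \sum_(i < N) ((u i ord0 != 0%R) || (v i ord0 != 0%R)))%N.
Proof.
move=> Hl Hv.
rewrite big_distrr /=.
under eq_bigr do rewrite -count_line.
rewrite big_split /= exchange_big /= -wt_col.
have -> : (\sum_(l : F) \sum_(i < N) ((u i ord0 + l * v i ord0)%R != 0%R : nat)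
   = \sum_(l : F) wt (u + l *: v))%N.
  apply: eq_bigr => l _; rewrite wt_col; apply: eq_bigr => i _; by rewrite !mxE.
rewrite mulSn addnC leq_add //.
apply: (@leq_trans (\sum_(l : F) d)); last by apply: leq_sum => l _; apply: Hl.
by rewrite sum_nat_const.
Qed.

Lemma qeval_scale (F : fieldType) n (Q X : 'M[F]_n) c :
  qeval Q (c *: X) = c * qeval Q X.
Proof.
rewrite /qeval mulr_sumr; apply: eq_bigr => i _; rewrite mulr_sumr.
apply: eq_bigr => j _; rewrite mxE; ring.
Qed.

Lemma part2 (F : finFieldType) N n m d (G : 'M[F]_(N,n)) (Qs : 'I_m -> 'M[F]_n) :
  (forall z : 'cV[F]_n, z != 0 -> (d <= wt (G *m z))%N) ->
  (~ exists x : 'cV[F]_n, x != 0 /\ forall l, qeval (Qs l) (x *m x^T) = 0) ->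
  forall X : 'M[F]_n, X^T = X -> (forall l, qeval (Qs l) X = 0) -> X != 0 ->
  (#|F|.+1 * d ^ 2 <= #|F| * wt (G *m X *m G^T))%N.
Proof.
move=> Hz Hno X XT HQ XN0.
have Xs : forall a b, X a b = X b a by move=> a b; rewrite -{1}XT mxE.
have /existsP [j Hj] : [exists j, col j X != 0].
  apply: contraT; rewrite negb_exists => /forallP H0; suff E : X == 0 by rewrite E in XN0.
  apply/eqP/matrixP => i k; have := H0 k; rewrite negbK => /eqP /matrixP /(_ i 0).
  by rewrite !mxE.
set w := col j X.
have /existsP [i0 Hi0] : [exists i, w i ord0 != 0].
  apply: contraT; rewrite negb_exists => /forallP H0; suff E : w == 0 by rewrite E in Hj.
  apply/eqP/matrixP => i k; have := H0 i; rewrite negbK (ord1 k) => /eqP ->.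
  by rewrite !mxE.
have /existsP [k Hk] : [exists k, [forall c : F, col k X != c *: w]].
  apply: contraT; rewrite negb_exists => /forallP Hall.
  have Hc : forall k, exists c, col k X = c *: w.
    move=> k; move: (Hall k); rewrite negb_forall => /existsP [c /negPn /eqP]; eauto.
  have [c0 Hc0] := Hc i0.
  pose lam := c0 / w i0 ord0.
  have EX : X = lam *: (w *m w^T).
    apply/matrixP => i k; have [ck Hck] := Hc k.
    have e1 : X i k = ck * w i ord0 by move/matrixP: Hck => /(_ i ord0); rewrite !mxE.
    have e2 : X i0 k = ck * w i0 ord0 by move/matrixP: Hck => /(_ i0 ord0); rewrite !mxE.
    have e3 : X k i0 = c0 * w k ord0 by move/matrixP: Hc0 => /(_ k ord0); rewrite !mxE.
    have ck_eq : ck = c0 * w k ord0 / w i0 ord0 by rewrite -e3 -Xs e2 mulfK.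
    rewrite !mxE big_ord1 !mxE e1 ck_eq /lam.
    have wi : forall a, w a ord0 = X a j by move=> a; rewrite mxE.
    rewrite -!wi.
    field; exact: Hi0.
  have lam0 : lam != 0.
    apply/negP => /eqP l0; move/negP: XN0; apply; by rewrite EX l0 scale0r.
  case: Hno; exists w; split => // l.
  have := HQ l; rewrite EX qeval_scale => /eqP; rewrite mulf_eq0 (negbTE lam0) /=.
  by move/eqP.
set v' := col k X.
have Hk' : forall c : F, v' != c *: w by move=> c; move/forallP: Hk; apply.
pose u := G *m w; pose v := G *m v'.
have Hl : forall l : F, (d <= wt (u + l *: v))%N.
  move=> l; rewrite /u /v scalemxAr -mulmxDr; apply: Hz.
  apply/negP => /eqP E.
  have [l0|l0] := eqVneq l 0.
    rewrite l0 scale0r addr0 in E; by move: Hj; rewrite -/w E eqxx.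
  have E2 : l *: v' = - w by rewrite -(addKr w (l *: v')) E addr0.
  have E3 : v' = (- l^-1) *: w by rewrite -[v'](scale1r) -(mulVf l0) -scalerA E2 scalerN scaleNr.
  by move: (Hk' (- l^-1)); rewrite -E3 eqxx.
have Hv : (d <= wt v)%N.
  apply: Hz; apply/negP => /eqP E.
  have := Hk' 0; by rewrite scale0r E eqxx.
have HS := @two_support F N d u v Hl Hv.
set S := (\sum_(i < N) _)%N in HS.
suff HY : (S * d <= wt (G *m X *m G^T))%N.
  rewrite expnS expn1 mulnA; apply: (leq_trans (leq_mul HS (leqnn d))).
  by rewrite -mulnA leq_mul2l HY orbT.
rewrite /S big_distrl /= wt_sum; apply: leq_sum => i _.
case: (boolP ((u i ord0 != 0) || (v i ord0 != 0))) => Hb; last by rewrite mul0n.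
rewrite mul1n.
pose z := X *m (row i G)^T.
have -> : (\sum_(j0 < N) ((G *m X *m G^T) i j0 != 0%R : nat))%N = wt (G *m z).
  rewrite wt_col; apply: eq_bigr => b _.
  have YT : (G *m X *m G^T)^T = G *m X *m G^T by rewrite !trmx_mul trmxK XT mulmxA.
  rewrite -[in LHS]YT [in LHS]mxE /z mulmxA; congr (nat_of_bool (~~ (_ == _))).
  rewrite !mxE; apply: eq_bigr => a _; by rewrite !mxE.
apply: Hz; apply/negP => /eqP Ez.
have Hz0 : forall b, \sum_a X b a * G i a = 0.
  move=> b; move/matrixP: Ez => /(_ b ord0); rewrite !mxE => E.
  apply: etrans _ E; apply: eq_bigr => a _; by rewrite !mxE.
have Hcol : forall c, (G *m col c X) i ord0 = 0.
  move=> c; rewrite mxE; apply: etrans _ (Hz0 c); apply: eq_bigr => a _; by rewrite mxE Xs mulrC.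
by move: Hb; rewrite /u /v /v' /w !Hcol eqxx.
Qed.

Lemma wt_outer (F : fieldType) N (c : 'cV[F]_N) : wt (c *m c^T) = (wt c ^ 2)%N.
Proof.
rewrite wt_sum wt_col expnS expn1 big_distrl /=; apply: eq_bigr => i _.
rewrite big_distrr /=; apply: eq_bigr => j _.
by rewrite !mxE big_ord1 !mxE mulf_eq0 negb_or mulnb.
Qed.

Lemma wt0 (F : fieldType) a b : wt (0 : 'M[F]_(a,b)) = 0%N.
Proof. rewrite wt_sum big1 // => i _; rewrite big1 // => j _; by rewrite mxE eqxx. Qed.

Theorem mainTheorem8 (F : finFieldType) (N n m d : nat)
  (G : 'M[F]_(N, n)) (Qs : 'I_m -> 'M[F]_n) :
  (1 <= d)%N ->
  (forall x : 'cV[F]_n, x != 0 ->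
     (d <= wt (G *m x))%N /\
     ((wt (G *m x))%:R <= (1 + 1 / (9 * #|F|)%:R) * d%:R :> rat)) ->
  ((exists x : 'cV[F]_n, [/\ x != 0, is01 x &
       forall l, qeval (Qs l) (x *m x^T) = 0]) ->
     exists Y : 'M[F]_N, [/\ inV G Qs Y, Y != 0 &
       (wt Y)%:R <= (1 + 1 / (3 * #|F|)%:R) * (d ^ 2)%:R :> rat])
  /\
  ((~ exists x : 'cV[F]_n, x != 0 /\ forall l, qeval (Qs l) (x *m x^T) = 0) ->
     forall Y : 'M[F]_N, inV G Qs Y -> Y != 0 ->
       (1 + 1 / (#|F|)%:R) * (d ^ 2)%:R <= (wt Y)%:R :> rat).
Proof.
move=> d1 Hw.
have qpos : (0 < #|F|)%N by apply/card_gt0P; exists 0.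
have rpos : 0 < (#|F|)%:R :> rat by rewrite ltr0n.
split.
  move=> [x [xn0 _ Hx]]; exists (G *m (x *m x^T) *m G^T).
  have [Hd Hu] := Hw x xn0.
  have EY : G *m (x *m x^T) *m G^T = (G *m x) *m (G *m x)^T.
    by rewrite trmx_mul !mulmxA.
  rewrite EY wt_outer; split.
  - exists (x *m x^T); split; first by rewrite trmx_mul trmxK.
    by split => //; rewrite -EY.
  - apply/negP => /eqP E; move: (@wt_outer _ _ (G *m x)); rewrite E wt0 => /esym/eqP.
    rewrite expn_eq0 andbT => /eqP W0; move: (leq_trans d1 Hd); by rewrite W0.
  - set W := (wt (G *m x)) in Hu *.
    set r := (#|F|)%:R : rat in rpos.
    rewrite !natrX !natrM -/r in Hu *.
    set D := d%:R : rat in Hu *.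
    have D0 : 0 <= D by rewrite ler0n.
    have W0 : 0 <= W%:R :> rat by rewrite ler0n.
    set e := 1 / (9%:R * r) in Hu.
    have e0 : 0 <= e by rewrite /e divr_ge0 // mulr_ge0 // ltW.
    have r1 : 1 <= r by rewrite /r ler1n.
    have e1 : e <= 1 by rewrite /e ler_pdivrMr ?mulr_gt0 ?ltr0n // mul1r; apply: le_trans r1 _; rewrite ler_peMl ?ltW // ler1n.
    have -> : 1 / (3%:R * r) = 3%:R * e by rewrite /e; field; rewrite gt_eqF.
    have H2 : W%:R ^+ 2 <= ((1 + e) * D) ^+ 2 by rewrite lerXn2r // ?nnegrE // mulr_ge0 // addr_ge0.
    apply: le_trans H2 _; rewrite exprMn.
    have : 0 <= e * (1 - e) * D ^+ 2.
      apply: mulr_ge0; last exact: exprn_ge0.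
      by apply: mulr_ge0 => //; rewrite subr_ge0.
    lra.
move=> Hno Y [X [XT [HQ EY]]] YN0.
have XN0 : X != 0.
  apply/negP => /eqP X0; by rewrite EY X0 mulmx0 mul0mx eqxx in YN0.
have H := @part2 F N n m d G Qs (fun z hz => (Hw z hz).1) Hno X XT HQ XN0.
rewrite -EY in H.
have Hr : ((#|F|.+1 * d ^ 2)%:R <= (#|F| * wt Y)%:R :> rat) by rewrite ler_nat.
set r := (#|F|)%:R : rat in rpos.
rewrite !natrM -addn1 natrD -/r in Hr.
have -> : (1 + 1 / r) * (d ^ 2)%:R = ((r + 1) * (d ^ 2)%:R) / r by field; rewrite gt_eqF.
rewrite ler_pdivrMr // natrX expr2 [X in _ <= X]mulrC. exact: Hr.
Qed.
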